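(* There exist constants $c>0$ and $n_0$ with the following property. For any integer $n\ge n_0$, any integer $B\ge1$, any $\eta\in(0,1/2)$ and any $\epsilon\in(0,1)$, there exist a sequence of $n\times n$ matrices $(A(k))_{k\ge0}$ and an initial vector $x(0)\in\mathbb{R}^n$ such that: each $A(k)$ is doubly stochastic with positive diagonal entries and all its positive entries are at least $\eta$; for every integer $k\ge0$ the directed graph $(N,\mathcal{E}(A(kB))\cup\cdots\cup\mathcal{E}(A((k+1)B-1)))$ is strongly connected; and, with $x(k+1)=A(k)x(k)$, whenever $V(x(k))/V(x(0))\le\epsilon$ we have \[k\ge c\,\frac{n^2}{\eta}\,B\log\frac1\epsilon.\]
   Context: $N=\{1,\dots,n\}$. A matrix is doubly stochastic if it is nonnegative with all row and column sums equal to $1$. For a matrix $A=[a_{ij}]$, $\mathcal{E}(A)$ is the set of directed edges $(j,i)$ (including self-edges) with $a_{ij}>0$. For $x\in\mathbb{R}^n$, $\bar x=\frac1n\sum_ix_i$ and $V(x)=\sum_i(x_i-\bar x)^2$. *)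

(* Defs.v *)
From HB Require Import structures.
From mathcomp Require Import all_boot all_order all_algebra.
From mathcomp Require Import Rstruct.
From Stdlib Require Rdefinitions Rpower.
Set Implicit Arguments. Unset Strict Implicit. Unset Printing Implicit Defensive.
Import Order.TTheory GRing.Theory Num.Theory.
Local Open Scope ring_scope.

Notation R := Rdefinitions.R.

Definition doubly_stochastic (n : nat) (A : 'M[R]_n) : Prop :=
  (forall i j, 0 <= A i j) /\
  (forall i, \sum_(j < n) A i j = 1) /\
  (forall j, \sum_(i < n) A i j = 1).

Definition edge_of (n : nat) (A : 'M[R]_n) : rel 'I_n := fun j i => 0 < A i j.

Definition union_edges (n B : nat) (A : nat -> 'M[R]_n) (k : nat) : rel 'I_n :=
  fun j i => [exists t : 'I_B, edge_of (A (k * B + t)%N) j i].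

Definition strongly_connected (n : nat) (e : rel 'I_n) : Prop :=
  forall i j : 'I_n, connect e i j.

Fixpoint traj (n : nat) (A : nat -> 'M[R]_n) (x0 : 'cV[R]_n) (k : nat) : 'cV[R]_n :=
  match k with
  | 0 => x0
  | k'.+1 => A k' *m traj A x0 k'
  end.

Definition avg (n : nat) (x : 'cV[R]_n) : R := (\sum_(i < n) x i 0) / n%:R.

Definition V (n : nat) (x : 'cV[R]_n) : R := \sum_(i < n) (x i 0 - avg x) ^+ 2.

(* Main.v *)
Require Import Defs.
From HB Require Import structures.
From mathcomp Require Import all_boot all_order all_algebra.
From mathcomp Require Import Rstruct.
From Stdlib Require Rdefinitions Rpower.
From mathcomp Require Import ring lra zify.
From Stdlib Require RIneq FunctionalExtensionality.
Import Order.TTheory GRing.Theory Num.Theory.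
Local Open Scope ring_scope.

Definition lnR (x : R) := Rpower.ln x.

Lemma ln_bound (rho eps : R) (m : nat) : 1/2 <= rho -> rho <= 1 -> 0 < eps ->
  rho ^+ m <= eps -> Rpower.ln (1/eps) <= m%:R * (2 * (1 - rho)).
Proof.
move=> h1 h2 he hm.
rewrite -/(lnR _).
have rp : 0 < rho by lra.
have rmp : 0 < rho ^+ m by apply: exprn_gt0.
have E1 : lnR (1/eps) <= lnR (1/ rho ^+ m).
  have [->|lt] := eqVneq eps (rho ^+ m); first lra.
  apply/RleP; apply: RIneq.Rlt_le; apply: Rpower.ln_increasing.
    apply/RltP; by rewrite divr_gt0.
  apply/RltP; rewrite !div1r ltf_pV2 ?posrE //.
  by rewrite lt_neqAle hm eq_sym lt.
have E2 : lnR (1/ rho ^+ m) = m%:R * lnR (1/rho).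
  rewrite /lnR div1r -exprVn -INRE -RpowE Rpower.ln_pow ?RmultE ?div1r //.
  by apply/RltP; rewrite invr_gt0.
have E3 : lnR (1/rho) <= 1/rho - 1.
  have := Rpower.exp_ineq1_le (lnR (1/rho)).
  rewrite Rpower.exp_ln; last by apply/RltP; rewrite divr_gt0.
  move/RleP; rewrite RplusE R1E; lra.
have E4 : 1/rho - 1 <= 2 * (1 - rho).
  rewrite -subr_ge0.
  have -> : 2 * (1 - rho) - (1 / rho - 1) = (1 - rho) * (2 * rho - 1) / rho.
    by field; apply/eqP; lra.
  by apply: divr_ge0; [apply: mulr_ge0; lra | lra].
apply: (le_trans E1); rewrite E2; apply: ler_wpM2l; first by rewrite ler0n.
exact: le_trans E3 E4.
Qed.

Set Implicit Arguments. Unset Strict Implicit.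

Section S.
Variable n : nat.
Implicit Types f g : 'I_n -> R.

Definition step (a : R) f : 'I_n -> R := fun i => (1 - a) * f i + a * f (ordS i).
Definition stepT (a : R) f : 'I_n -> R := fun i => (1 - a) * f i + a * f (ord_pred i).
Definition Nsq f := \sum_i f i ^+ 2.
Definition Dsum f := \sum_i (f (ordS i) - f i) ^+ 2.
Definition ip f g := \sum_i f i * g i.

Lemma sumS (F : 'I_n -> R) : \sum_i F (ordS i) = \sum_i F i.
Proof. by rewrite [RHS](reindex_inj (@ordS_inj n)). Qed.

Lemma sumP (F : 'I_n -> R) : \sum_i F (ord_pred i) = \sum_i F i.
Proof. by rewrite [RHS](reindex_inj (@ord_pred_inj n)). Qed.

Lemma Nsq_step a f : Nsq (step a f) = Nsq f - a * (1 - a) * Dsum f.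
Proof.
rewrite /Nsq /Dsum /step.
have -> : \sum_i ((1 - a) * f i + a * f (ordS i)) ^+ 2 =
  \sum_i (f i ^+ 2 - a * (1 - a) * (f (ordS i) - f i) ^+ 2 + a * (f (ordS i) ^+ 2 - f i ^+ 2)).
  by apply: eq_bigr => i _; ring.
have Z : \sum_i (f (ordS i) ^+ 2 - f i ^+ 2) = 0.
  by rewrite sumrB (sumS (fun i => f i ^+ 2)) subrr.
by rewrite big_split /= -mulr_sumr Z mulr0 addr0 sumrB -mulr_sumr.
Qed.

Lemma Dsum_pred f : \sum_i (f (ord_pred i) - f i) ^+ 2 = Dsum f.
Proof.
rewrite /Dsum -[LHS](sumS (fun i => (f (ord_pred i) - f i) ^+ 2)) /=.
apply: eq_bigr => i _; rewrite ordSK; ring.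
Qed.

Lemma Nsq_stepT a f : Nsq (stepT a f) = Nsq f - a * (1 - a) * Dsum f.
Proof.
rewrite /Nsq -Dsum_pred /stepT.
have -> : \sum_i ((1 - a) * f i + a * f (ord_pred i)) ^+ 2 =
  \sum_i (f i ^+ 2 - a * (1 - a) * (f (ord_pred i) - f i) ^+ 2 + a * (f (ord_pred i) ^+ 2 - f i ^+ 2)).
  by apply: eq_bigr => i _; ring.
have Z : \sum_i (f (ord_pred i) ^+ 2 - f i ^+ 2) = 0.
  by rewrite sumrB (sumP (fun i => f i ^+ 2)) subrr.
by rewrite big_split /= -mulr_sumr Z mulr0 addr0 sumrB -mulr_sumr.
Qed.

Lemma ip_adj a f g : ip (step a f) g = ip f (stepT a g).
Proof.
rewrite /ip /step /stepT.
have -> : \sum_i ((1 - a) * f i + a * f (ordS i)) * g i =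
   (1 - a) * \sum_i f i * g i + a * \sum_i f (ordS i) * g i.
  by rewrite !mulr_sumr -big_split; apply: eq_bigr => i _ /=; ring.
have -> : \sum_i f i * ((1 - a) * g i + a * g (ord_pred i)) =
   (1 - a) * \sum_i f i * g i + a * \sum_i f i * g (ord_pred i).
  by rewrite !mulr_sumr -big_split; apply: eq_bigr => i _ /=; ring.
congr (_ + _ * _).
rewrite -[LHS](sumP (fun i => f (ordS i) * g i)) /=.
by apply: eq_bigr => i _; rewrite ord_predK.
Qed.

Lemma Nsq_ge0 f : 0 <= Nsq f.
Proof. by apply: sumr_ge0 => i _; apply: sqr_ge0. Qed.

Lemma CS f g : 0 < Nsq f -> ip f g ^+ 2 <= Nsq f * Nsq g.
Proof.
move=> hf.
have H : 0 <= \sum_i (g i * Nsq f - ip f g * f i) ^+ 2.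
  by apply: sumr_ge0 => i _; apply: sqr_ge0.
have E : \sum_i (g i * Nsq f - ip f g * f i) ^+ 2 =
   Nsq f * (Nsq f * Nsq g - ip f g ^+ 2).
  have -> : \sum_i (g i * Nsq f - ip f g * f i) ^+ 2 =
     \sum_i (Nsq f ^+ 2 * g i ^+ 2 + (- (2 * Nsq f * ip f g)) * (f i * g i)
        + ip f g ^+ 2 * f i ^+ 2).
    by apply: eq_bigr => i _; ring.
  rewrite !big_split /= -!mulr_sumr -/(Nsq g) -/(Nsq f) -/(ip f g); ring.
rewrite E in H.
rewrite -subr_ge0; move: H; rewrite pmulr_rge0 //.
Qed.

Lemma propagate a f rho : 0 < Nsq f -> rho * Nsq f <= Nsq (step a f) ->
  rho * Nsq (step a f) <= Nsq (step a (step a f)).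
Proof.
move=> hf hr.
have e1 : Nsq (step a f) = ip f (stepT a (step a f)).
  by rewrite -ip_adj.
have e2 : Nsq (stepT a (step a f)) = Nsq (step a (step a f)).
  by rewrite Nsq_step Nsq_stepT.
have := @CS f (stepT a (step a f)) hf; rewrite -e1 e2 => h.
have h0 := Nsq_ge0 (step a f).
have h3 : rho * Nsq f * Nsq (step a f) <= Nsq (step a f) ^+ 2.
  by rewrite expr2; apply: ler_wpM2r.
rewrite -(ler_pM2l hf); apply: le_trans h.
apply: le_trans h3; rewrite le_eqVlt; apply/orP; left; apply/eqP; ring.
Qed.
End S.

Definition Mmat n (a : R) : 'M[R]_n :=
  \matrix_(i, j) ((1 - a) * (j == i)%:R + a * (j == ordS i)%:R).

Arguments Mmat {n}.

Lemma sum_delta n (i : 'I_n) (F : 'I_n -> R) : \sum_j (j == i)%:R * F j = F i.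
Proof.
rewrite (bigD1 i) //= eqxx mul1r big1 ?addr0 // => j /negbTE ->; by rewrite mul0r.
Qed.

Lemma Mmat_mul n (a : R) (x : 'cV[R]_n) i :
  (Mmat a *m x) i 0 = step a (fun j => x j 0) i.
Proof.
rewrite mxE /step.
under eq_bigr => j _ do rewrite mxE mulrDl -!mulrA.
rewrite big_split /= -!mulr_sumr !sum_delta.
by [].
Qed.

Lemma Mmat_row n (a : R) (i : 'I_n) : \sum_j Mmat a i j = 1.
Proof.
have -> : \sum_j Mmat a i j = \sum_j ((j == i)%:R * (1 - a) + (j == ordS i)%:R * a).
  by apply: eq_bigr => j _; rewrite mxE; ring.
rewrite big_split /= !sum_delta; ring.
Qed.

Lemma Mmat_col n (a : R) (j : 'I_n) : \sum_i Mmat a i j = 1.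
Proof.
under eq_bigr => i _ do rewrite mxE.
rewrite big_split /= -!mulr_sumr.
have h1 : \sum_i (j == i)%:R = 1 :> R.
  rewrite -[RHS](sum_delta j (fun _ => 1)).
  by apply: eq_bigr => i _; rewrite eq_sym mulr1.
have h2 : \sum_i (j == ordS i)%:R = 1 :> R.
  have e : \sum_i (j == ordS i)%:R = \sum_i (j == ordS (ord_pred i))%:R :> R.
    exact: esym (sumP (fun i => (j == ordS i)%:R)).
  rewrite e; under eq_bigr => i _ do rewrite ord_predK. exact: h1.
rewrite h1 h2; ring.
Qed.

Lemma connect_cyc n (e : rel 'I_n) : (forall i, e (ordS i) i) ->
  forall x y, connect e x y.
Proof.
move=> he x y.
have H : forall k, connect e (iter k (@ordS n) y) y.
  elim=> [|k IH] /=; first exact: connect0.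
  apply: connect_trans IH; apply: connect1; exact: he.
have V : forall k, val (iter k (@ordS n) y) = ((y + k) %% n)%N.
  elim=> [|k IH] /=; first by rewrite addn0 modn_small.
  by rewrite IH addnS -[((y + k) %% n).+1]addn1 -[(y + k).+1]addn1 modnDml.
have -> : x = iter (x + n - y) (@ordS n) y.
  apply: val_inj; rewrite V.
  have -> : (y + (x + n - y) = x + n)%N.
    by rewrite addnC subnK // (leq_trans (ltnW (ltn_ord y))) // leq_addl.
  by rewrite modnDr modn_small.
exact: H.
Qed.

Definition tent n : 'I_n -> R := fun i => (minn i (n - i))%:R.

Lemma natsq (u v : nat) : (u <= v.+1)%N -> (v <= u.+1)%N -> ((u%:R - v%:R : R) ^+ 2 <= 1).
Proof.
move=> h1 h2.
have [h|[h|h]] : u = v.+1 \/ u = v \/ v = u.+1 by lia.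
- by rewrite h -addn1 natrD; lra.
- by rewrite h subrr expr2 mul0r ler01.
- by rewrite h -addn1 natrD; lra.
Qed.

Lemma tent_diff n (i : 'I_n) : (tent (ordS i) - tent i) ^+ 2 <= 1.
Proof.
rewrite /tent /=.
have hi := ltn_ord i.
move: (nat_of_ord i) hi => k hk.
case: (ltnP k.+1 n) => h.
  rewrite modn_small //; apply: natsq; lia.
have e : k.+1 = n by lia.
rewrite e modnn; apply: natsq; lia.
Qed.

Lemma range_lb (F : nat -> R) n l h b : (l <= h)%N -> (h <= n)%N ->
  (forall i, 0 <= F i) -> (forall i, (l <= i < h)%N -> b <= F i) ->
  b *+ (h - l) <= \sum_(0 <= i < n) F i.
Proof.
move=> lh hn F0 Fb.
rewrite (@big_cat_nat _ _ _ l 0 n _ _ (leq0n l) (leq_trans lh hn)) (@big_cat_nat _ _ _ h l n _ _ lh hn) /=.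
have s1 : 0 <= \sum_(0 <= i < l) F i by apply: sumr_ge0.
have s2 : 0 <= \sum_(h <= i < n) F i by apply: sumr_ge0.
have s3 : b *+ (h - l) <= \sum_(l <= i < h) F i.
  rewrite -sumr_const_nat; exact: ler_sum_nat.
lra.
Qed.

Lemma tent_lower n (c : R) : (16 <= n)%N ->
  ((n %/ 8)%:R) ^+ 3 <= \sum_(i < n) (tent i - c) ^+ 2.
Proof.
move=> hn.
set q := (n %/ 8)%N.
have hq : (q * 8 <= n)%N by apply: leq_trunc_div.
rewrite /tent -(big_mkord xpredT (fun i => ((minn i (n - i))%:R - c) ^+ 2)).
have F0 : forall i, 0 <= ((minn i (n - i))%:R - c) ^+ 2 :> R by move=> i; apply: sqr_ge0.
have e3 : (q%:R ^+ 3 : R) = q%:R ^+ 2 *+ q.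
  by rewrite -mulr_natr; ring.
rewrite e3.
have [hc|hc] := lerP c (2 * q%:R).
- have -> : q = (4 * q - 3 * q)%N by lia.
  apply: range_lb => //; try lia.
  move=> i /andP [h1 h2].
  have -> : minn i (n - i) = i by lia.
  have : (3 * q <= i)%N by [].
  rewrite -(ler_nat R) natrM => h3.
  have h4 : 0 <= q%:R :> R by rewrite ler0n.
  have -> : (4 * q - 3 * q)%N = q by lia.
  nra.
- rewrite -[X in _ *+ X]subn0; apply: range_lb (leq0n q) _ F0 _; first lia.
  move=> i /andP [_ h2].
  have -> : minn i (n - i) = i by lia.
  have : (i <= q)%N by lia.
  rewrite -(ler_nat R) => h3.
  have h4 : 0 <= i%:R :> R by rewrite ler0n.
  nra.
Qed.

Unset Implicit Arguments. Set Strict Implicit.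

Lemma div8 n : (8 <= n)%N -> (n <= 16 * (n %/ 8))%N.
Proof.
move=> hn; have := divn_eq n 8; have := ltn_pmod n (isT : (0 < 8)%N).
move: (n %/ 8)%N (n %% 8)%N => q r; lia.
Qed.

Lemma lt_pred_B (r B : nat) : (r != B.-1)%N -> (r < B)%N -> (r.+1 < B)%N.
Proof. move=> /eqP h1 h2; lia. Qed.

Theorem proposition2 :
  exists (c : R) (n0 : nat), 0 < c /\
  forall (n B : nat) (eta eps : R),
    (n0 <= n)%N -> (1 <= B)%N ->
    0 < eta -> eta < 1 / 2 -> 0 < eps -> eps < 1 ->
    exists (A : nat -> 'M[R]_n) (x0 : 'cV[R]_n),
      (forall k, doubly_stochastic (A k)) /\
      (forall k i, 0 < A k i i) /\
      (forall k i j, 0 < A k i j -> eta <= A k i j) /\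
      (forall k, strongly_connected (union_edges B A k)) /\
      (forall k : nat, V (traj A x0 k) / V x0 <= eps ->
         c * (n%:R ^+ 2 / eta) * B%:R * Rpower.ln (1 / eps) <= k%:R).
Proof.
exists (1 / 8192), 48%N; split; first lra.
move=> n B eta eps hn hB he1 he2 hp1 hp2.
pose a k : R := if (k %% B == B.-1)%N then eta else 0.
have ha : forall k, a k = 0 \/ a k = eta.
  by move=> k; rewrite /a; case: ifP; [right|left].
exists (fun k => Mmat (a k)), (\col_(i < n) tent i).
split; [|split; [|split; [|split]]].
- move=> k; split; [|split].
  + move=> i j; rewrite mxE; case: (ha k) => ->;
      case: (j == i); case: (j == ordS i); rewrite /= ?mulr1 ?mulr0; lra.
  + exact: Mmat_row.
  + exact: Mmat_col.
- move=> k i; rewrite mxE eqxx; case: (ha k) => ->;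
    case: (i == ordS i); rewrite /= ?mulr1 ?mulr0; lra.
- move=> k i j; rewrite mxE; case: (ha k) => ->;
    case: (j == i); case: (j == ordS i); rewrite /= ?mulr1 ?mulr0; lra.
- move=> k; apply: connect_cyc => i.
  apply/existsP.
  have hB1 : (B.-1 < B)%N by lia.
  exists (Ordinal hB1); rewrite /edge_of /=.
  have -> : a (k * B + B.-1)%N = eta.
    rewrite /a modnMDl modn_small ?eqxx //.
  rewrite mxE eqxx; case: (ordS i == i); rewrite /= ?mulr1 ?mulr0; lra.
- move=> k hk.
  set X0 := \col_(i < n) tent i.
  set A := (fun j : nat => @Mmat n (a j)).
  pose c := avg X0.
  pose z m : 'I_n -> R := fun i => traj A X0 m i 0 - c.
  have Hz : forall m, z m.+1 = step (a m) (z m).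
    move=> m; apply: FunctionalExtensionality.functional_extensionality => i.
    rewrite /z /= Mmat_mul /step; ring.
  have Havg : forall m, avg (traj A X0 m) = c.
    elim=> [|m IH] //=; rewrite -IH /avg; congr (_ / _).
    under eq_bigr => i _ do rewrite Mmat_mul.
    have e := sumS (fun i => traj A X0 m i 0); simpl in e.
    rewrite /step big_split /= -!mulr_sumr e; ring.
  have HV : forall m, V (traj A X0 m) = Nsq (z m).
    by move=> m; rewrite /V Havg.
  have HV0 : V X0 = Nsq (z 0%N) := HV 0%N.
  have step0 : forall f : 'I_n -> R, step 0 f = f.
    move=> f; apply: FunctionalExtensionality.functional_extensionality => i.
    rewrite /step; ring.
  set q := (n %/ 8)%N.
  set Q := (q%:R : R).
  have hq6 : (6 <= q)%N by apply: (@leq_div2r 8 48 n hn).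
  have hnq : (n <= 16 * q)%N by apply: div8; apply: leq_trans hn.
  have Q6 : 6 <= Q by rewrite /Q (ler_nat R 6 q).
  have nQ : n%:R <= 16 * Q by rewrite /Q -natrM ler_nat.
  have N0lb : Q ^+ 3 <= Nsq (z 0%N).
    rewrite /Nsq /z /=.
    under eq_bigr => i _ do rewrite mxE.
    by apply: tent_lower; apply: leq_trans hn.
  have N0pos : 0 < Nsq (z 0%N).
    apply: lt_le_trans N0lb; apply: exprn_gt0; lra.
  have D0 : Dsum (z 0%N) <= n%:R.
    rewrite /Dsum.
    apply: (@le_trans _ _ (\sum_(i < n) (1 : R))); last by rewrite sumr_const card_ord.
    apply: ler_sum => i _; rewrite /z /= !mxE.
    have -> : tent (ordS i) - c - (tent i - c) = tent (ordS i) - tent i by ring.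
    exact: tent_diff.
  have D0ge : 0 <= Dsum (z 0%N) by apply: sumr_ge0 => i _; apply: sqr_ge0.
  pose rho := Nsq (step eta (z 0%N)) / Nsq (z 0%N).
  pose w := 1 - rho.
  have wN : w * Nsq (z 0%N) = eta * (1 - eta) * Dsum (z 0%N).
    rewrite /w /rho Nsq_step; field; lra.
  have w0 : 0 <= w.
    rewrite -(pmulr_lge0 _ N0pos) wN; apply: mulr_ge0 => //; apply: mulr_ge0; lra.
  have W : w * Q ^+ 3 <= eta * n%:R.
    apply: (@le_trans _ _ (w * Nsq (z 0%N))); first exact: ler_wpM2l.
    rewrite wN; apply: (@le_trans _ _ (eta * Dsum (z 0%N))).
      rewrite -mulrA; apply: ler_wpM2l; first lra.
      apply: ler_piMl => //; lra.
    apply: ler_wpM2l => //; lra.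
  have Q3 : 36 * Q <= Q ^+ 3.
    have h : 36 <= Q ^+ 2.
      have h6 : 6 * 6 <= Q * Q by apply: ler_pM; lra.
      rewrite expr2; apply: le_trans h6; lra.
    rewrite exprSr; apply: ler_wpM2r => //; lra.
  have whalf : w <= 1 / 2.
    have h0 : eta * n%:R <= 8 * Q.
      apply: (@le_trans _ _ (1 / 2 * n%:R)); last lra.
      by apply: ler_wpM2r; [rewrite ler0n | lra].
    have h1 : (w * 36) * Q <= 8 * Q.
      rewrite -mulrA; apply: (@le_trans _ _ (w * Q ^+ 3)); first exact: ler_wpM2l.
      exact: le_trans W h0.
    have h2 : w * 36 <= 8 by rewrite -(ler_pM2r (_ : 0 < Q)) //; lra.
    lra.
  have rho_half : 1 / 2 <= rho by rewrite /w in whalf; lra.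
  have rho_le1 : rho <= 1 by rewrite /w in w0; lra.
  have inv : forall m, 0 < Nsq (z m) /\ rho * Nsq (z m) <= Nsq (step eta (z m)) /\
      rho ^+ (m %/ B) * Nsq (z 0%N) <= Nsq (z m).
    elim=> [|m [p1 [p2 p3]]].
      split; first exact: N0pos.
      split; first by rewrite /rho divfK ?le_refl //; apply/eqP => h; rewrite h in N0pos; rewrite ltxx in N0pos.
      by rewrite div0n expr0 mul1r.
    rewrite Hz.
    have hmB := ltn_pmod m hB.
    have dm := divn_eq m B.
    case: (boolP (m %% B == B.-1)%N) => hm.
    + have -> : a m = eta by rewrite /a hm.
      have hdiv : (m.+1 %/ B = (m %/ B).+1)%N.
        have -> : m.+1 = ((m %/ B).+1 * B)%N.
          move/eqP: hm => hm; by rewrite {1}dm hm -addn1 -addnA addn1 prednK // mulSn addnC.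
        by rewrite mulnK.
      split; first by apply: lt_le_trans p2; apply: mulr_gt0 => //; lra.
      split; first exact: propagate.
      rewrite hdiv exprS -mulrA.
      apply: le_trans p2; apply: ler_wpM2l => //; lra.
    + have -> : a m = 0 by rewrite /a (negbTE hm).
      have hdiv : (m.+1 %/ B = m %/ B)%N.
        have -> : m.+1 = (m %/ B * B + (m %% B).+1)%N by rewrite {1}dm addnS.
        by rewrite divnMDl // (divn_small (@lt_pred_B _ _ hm hmB)) addn0.
      by rewrite step0 hdiv.
  have [_ [_ p3]] := inv k.
  rewrite HV HV0 in hk.
  have hpow : rho ^+ (k %/ B) <= eps.
    apply: le_trans hk; rewrite ler_pdivlMr //.
  have hL := @ln_bound _ _ _ rho_half rho_le1 hp1 hpow.
  change (1 / 8192 * (n%:R ^+ 2 / eta) * B%:R * lnR (1 / eps) <= k%:R).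
  set m := (k %/ B)%N in hL.
  have hQ0 : 0 <= Q by apply: le_trans Q6.
  have hn0 : 0 <= n%:R :> R by rewrite ler0n.
  have n3 : n%:R ^+ 3 <= 4096 * Q ^+ 3.
    have e1 : n%:R ^+ 3 = n%:R * n%:R * n%:R :> R by ring.
    have e2 : 4096 * Q ^+ 3 = (16 * Q) * (16 * Q) * (16 * Q) by ring.
    rewrite e1 e2; apply: ler_pM => //; first by apply: mulr_ge0.
    by apply: ler_pM.
  have S0 : n%:R ^+ 2 * w * Q ^+ 3 <= 4096 * eta * Q ^+ 3.
    apply: (@le_trans _ _ (n%:R ^+ 2 * (eta * n%:R))).
      by rewrite -mulrA; apply: ler_wpM2l => //; apply: sqr_ge0.
    have -> : n%:R ^+ 2 * (eta * n%:R) = eta * n%:R ^+ 3 by ring.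
    have -> : 4096 * eta * Q ^+ 3 = eta * (4096 * Q ^+ 3) by ring.
    by apply: ler_wpM2l => //; apply: ltW.
  have S1 : n%:R ^+ 2 * w <= 4096 * eta.
    by rewrite -(ler_pM2r (_ : 0 < Q ^+ 3)) //; apply: exprn_gt0; apply: lt_le_trans Q6.
  have hmB : (m * B)%:R <= k%:R :> R by rewrite ler_nat; apply: leq_trunc_div.
  have hB0 : 0 <= B%:R :> R by rewrite ler0n.
  have hm0 : 0 <= m%:R :> R by rewrite ler0n.
  have coef : 0 <= 1 / 8192 * (n%:R ^+ 2 / eta) * B%:R.
    apply: mulr_ge0 => //; apply: mulr_ge0; first by apply: divr_ge0; rewrite ?ler01 // ler0n.
    apply: divr_ge0; [apply: sqr_ge0 | exact: ltW].
  apply: (@le_trans _ _ (1 / 8192 * (n%:R ^+ 2 / eta) * B%:R * (m%:R * (2 * w)))).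
    exact: ler_wpM2l.
  have -> : 1 / 8192 * (n%:R ^+ 2 / eta) * B%:R * (m%:R * (2 * w)) =
     (B%:R * m%:R / (4096 * eta)) * (n%:R ^+ 2 * w).
    by field; apply: lt0r_neq0.
  apply: (@le_trans _ _ ((B%:R * m%:R / (4096 * eta)) * (4096 * eta))).
    apply: ler_wpM2l => //; apply: divr_ge0; [exact: mulr_ge0 | apply: mulr_ge0 => //; exact: ltW].
  rewrite divfK; last by apply: lt0r_neq0; apply: mulr_gt0.
  by rewrite mulrC -natrM.
Qed.
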